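(* Let $G$ be a graph and $S\subseteq V(G)$. Then $S$ is a minimal zero forcing set of $G$ if and only if $S$ is a maximal ZIr-set of $G$ and $S\cap F\neq\emptyset$ for every fort $F$ of $G$.
   Context: Graphs are simple, finite, undirected, with nonempty vertex set; $N(v)$ is the open neighborhood. Zero forcing: starting from a set of blue vertices, a blue vertex $u$ changes a white vertex $w$ to blue if $w$ is the only white neighbor of $u$; $B$ is a zero forcing set if eventually all vertices are blue; a minimal zero forcing set is one with no proper subset that is a zero forcing set. A nonempty $F\subseteq V(G)$ is a fort if every $v\in V(G)\setminus F$ satisfies $|N(v)\cap F|\ne 1$. For $S\subseteq V(G)$ and $x\in S$, a private fort of $x$ (relative to $S$) is a fort $F$ with $S\cap F=\{x\}$. $S$ is a ZIr-set if every element of $S$ has a private fort relative to $S$; a maximal ZIr-set is a ZIr-set not properly contained in another ZIr-set. *)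

(* Defs.v *)
From mathcomp Require Import all_boot.
Set Implicit Arguments. Unset Strict Implicit. Unset Printing Implicit Defensive.

Section Graph.
Variable T : finType.
Variable e : rel T.

Definition simple_graph : Prop := symmetric e /\ irreflexive e.

Definition nbhd (v : T) : {set T} := [set w | e v w].

(* [forces_reach B C]: starting with blue set B, the blue set C can be obtained
   by a finite sequence of zero forcing steps: a blue u whose unique white
   neighbour is w turns w blue. *)
Inductive forces_reach (B : {set T}) : {set T} -> Prop :=
| fr_refl : forces_reach B B
| fr_step (C : {set T}) (u w : T) :
    forces_reach B C -> u \in C -> w \notin C ->
    nbhd u :\: C = [set w] -> forces_reach B (w |: C).

Definition zero_forcing_set (B : {set T}) : Prop := forces_reach B [set: T].

Definition minimal_zero_forcing_set (B : {set T}) : Prop :=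
  zero_forcing_set B /\ forall B' : {set T}, B' \proper B -> ~ zero_forcing_set B'.

Definition fort (F : {set T}) : Prop :=
  F != set0 /\ forall v, v \notin F -> #|nbhd v :&: F| != 1.

Definition private_fort (S : {set T}) (x : T) (F : {set T}) : Prop :=
  fort F /\ S :&: F = [set x].

Definition ZIr_set (S : {set T}) : Prop :=
  forall x, x \in S -> exists F, private_fort S x F.

Definition maximal_ZIr_set (S : {set T}) : Prop :=
  ZIr_set S /\ forall S' : {set T}, S \proper S' -> ~ ZIr_set S'.

End Graph.

(* Main.v *)
Require Import Defs.
From mathcomp Require Import all_boot.
From Stdlib Require Classical_Prop.
Set Implicit Arguments. Unset Strict Implicit. Unset Printing Implicit Defensive.

Section Aux.
Variable T : finType.
Variable e : rel T.

Lemma reach_sub B C : forces_reach e B C -> B \subset C.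
Proof.
elim=> [|C' u w _ IH _ _ _]; first exact: subxx.
apply: subset_trans IH _; exact: subsetU1.
Qed.

Lemma reach_disj B C : forces_reach e B C ->
  forall F, fort e F -> B :&: F = set0 -> C :&: F = set0.
Proof.
elim=> [|C' u w _ IH uC wC Hn] F HF HB //.
have IHF := IH F HF HB.
rewrite setIUl IHF setU0.
case wF: (w \in F); last first.
  by apply/setP=> x; rewrite !inE; apply/negP=> /andP[/eqP -> ]; rewrite wF.
exfalso.
have uF : u \notin F.
  apply/negP=> uF.
  have : u \in C' :&: F by rewrite inE uC uF.
  by rewrite IHF inE.
case: HF => _ /(_ u uF); apply/negP; rewrite negbK.
apply/cards1P; exists w; apply/setP=> x; rewrite !inE.
apply/andP/eqP.
  move=> [xn xF].
  have xC : x \notin C'.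
    apply/negP=> xC.
    have : x \in C' :&: F by rewrite inE xC xF.
    by rewrite IHF inE.
  have : x \in nbhd e u :\: C' by apply/setDP; rewrite inE.
  by rewrite Hn inE => /eqP.
move=> ->; split=> //.
have : w \in nbhd e u :\: C' by rewrite Hn inE.
by move/setDP=> [+ _]; rewrite inE.
Qed.

Lemma zfs_iff B : zero_forcing_set e B <-> forall F, fort e F -> B :&: F != set0.
Proof.
split.
  move=> HZ F HF; apply/eqP=> HB.
  have := reach_disj HZ HF HB; rewrite setTI => HF0.
  by case: HF; rewrite HF0 eqxx.
move=> HB.
suff H : forall n C, #|~: C| <= n -> forces_reach e B C -> zero_forcing_set e B.
  exact: (H _ B (leqnn _) (fr_refl _ _)).
elim=> [|n IH] C Hc HR.
  have : ~: C = set0 by apply/eqP; rewrite -cards_eq0 -leqn0.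
  move=> H0; have HC : C = setT by rewrite -(setCK C) H0 setC0.
  by rewrite /zero_forcing_set -HC.
case Cf: (C == setT); first by move/eqP: Cf => HC; rewrite /zero_forcing_set -HC.
case: (boolP [exists v, (v \notin ~: C) && (#|nbhd e v :&: ~: C| == 1)]).
  move/existsP=> [v /andP[vC /cards1P [w Hw]]].
  rewrite inE negbK in vC.
  have wC : w \notin C.
    have : w \in nbhd e v :&: ~: C by rewrite Hw inE.
    by rewrite !inE => /andP[].
  have Hn : nbhd e v :\: C = [set w] by rewrite setDE.
  apply: (IH (w |: C)); last exact: fr_step HR vC wC Hn.
  rewrite setCU.
  have : #|~: [set w] :&: ~: C| < #|~: C|.
    apply: proper_card; apply/properP; split; first exact: subsetIr.
    by exists w; rewrite !inE ?wC // eqxx.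
  move=> H; rewrite -ltnS; exact: leq_trans H Hc.
move=> Hne; exfalso.
have Hf : fort e (~: C).
  split.
    by apply/eqP => H; move: Cf; rewrite -(setCK C) H setC0 eqxx.
  move=> v vC; apply/negP=> H1; move/negP: Hne; apply; apply/existsP; exists v.
  by rewrite vC.
have := HB _ Hf.
have : B :&: ~: C = set0.
  apply/setP=> x; rewrite !inE; case xB: (x \in B) => //=.
  by rewrite (subsetP (reach_sub HR) _ xB).
by move=> ->; rewrite eqxx.
Qed.

End Aux.

Lemma priv_lemma (T : finType) (S F : {set T}) x :
  (S :\ x) :&: F = set0 -> S :&: F != set0 -> S :&: F = [set x].
Proof.
move=> H0 Hn.
have key : forall z, z \in S :&: F -> z = x.
  move=> z zI; apply/eqP; apply/negP=> /negP zx.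
  have : z \in (S :\ x) :&: F.
    by move: zI; rewrite !inE zx.
  by rewrite H0 inE.
apply/setP=> z; rewrite inE; apply/idP/eqP; first exact: key.
move=> ->; case/set0Pn: Hn => y yI.
by rewrite -(key _ yI).
Qed.

Theorem proposition2p2 (T : finType) (e : rel T) (S : {set T}) :
  simple_graph e -> 0 < #|T| ->
  (minimal_zero_forcing_set e S <->
   (maximal_ZIr_set e S /\ forall F : {set T}, fort e F -> S :&: F != set0)).
Proof.
move=> _ _; split.
  move=> [/zfs_iff HZ Hmin]; split; last exact: HZ.
  split.
    move=> x xS.
    have NZ : ~ zero_forcing_set e (S :\ x).
      apply: Hmin; apply/properP; split; first exact: subD1set.
      by exists x; rewrite // !inE eqxx.
    apply: Classical_Prop.NNPP => Hno; apply: NZ; apply/zfs_iff => F HF; apply/eqP=> H0.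
    apply: Hno; exists F; split=> //.
    exact: priv_lemma H0 (HZ F HF).
  move=> S' /properP [sub [y yS' yS]] HZ'.
  case: (HZ' y yS') => F [HF HI].
  case/set0Pn: (HZ F HF) => z.
  rewrite inE => /andP [zS zF].
  have : z \in S' :&: F by rewrite inE (subsetP sub _ zS) zF.
  by rewrite HI inE => /eqP zy; move: yS; rewrite -zy zS.
move=> [[HZ _] Hall]; split; first by apply/zfs_iff.
move=> B' /properP [sub [x xS xB]] /zfs_iff H.
case: (HZ x xS) => F [HF HI].
case/set0Pn: (H F HF) => z.
rewrite inE => /andP [zB zF].
have : z \in S :&: F by rewrite inE (subsetP sub _ zB) zF.
by rewrite HI inE => /eqP zx; move: xB; rewrite -zx zB.
Qed.
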